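(* Let $\mathbb{F}$ be a field and let $q\in\mathbb{F}$ be a root of unity with $q\neq 1$; let $p\geq 2$ be the least positive integer with $q^p=1$. Let $\mathcal{H}$ be the unital associative $\mathbb{F}$-algebra generated by $A,B$ subject to $AB-qBA=I$, with $[f,g]=fg-gf$ and $\Lambda:=AB-BA$. Let $\mathcal{L}$ be the Lie subalgebra of $\mathcal{H}$ generated by $A,B$, and let $\mathcal{N}$ be the linear subspace spanned by all $B^m\Lambda^n$ and $\Lambda^nA^m$ with $m,n$ positive integers both congruent to $0$ modulo $p$. Then the sum $\mathcal{L}+\mathcal{N}$ is direct, i.e. $\mathcal{L}\cap\mathcal{N}=\{0\}$.
   Context: The elements $\Lambda^k$, $\Lambda^kA^l$, $B^l\Lambda^k$ ($k\geq 0$, $l\geq 1$ integers, $\Lambda^0=I$) form a basis of $\mathcal{H}$. *)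

(* Defs.v *)
From HB Require Import structures.
From mathcomp Require Import all_boot all_order all_algebra.
Set Implicit Arguments. Unset Strict Implicit. Unset Printing Implicit Defensive.
Import GRing.Theory.
Local Open Scope ring_scope.

Definition comm {R : pzRingType} (f g : R) : R := f * g - g * f.

Definition in_gen_alg {F : fieldType} {H : algType F} (A B x : H) : Prop :=
  forall S : H -> Prop, S 1 -> S A -> S B ->
    (forall u v, S u -> S v -> S (u + v)) ->
    (forall (c : F) u, S u -> S (c *: u)) ->
    (forall u v, S u -> S v -> S (u * v)) -> S x.

(* (H, A, B) is the unital associative F-algebra generated by A, B
   subject to AB - qBA = I, i.e. it is generated by A, B, satisfies the
   relation, and is universal among F-algebras with such a pair. *)
Definition is_qHeisenberg (F : fieldType) (q : F) (H : algType F) (A B : H) : Prop :=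
  [/\ A * B - q *: (B * A) = 1,
      (forall x : H, in_gen_alg A B x) &
      (forall (R : algType F) (a b : R), a * b - q *: (b * a) = 1 ->
         exists f : H -> R,
           (forall u v, f (u + v) = f u + f v) /\
           (forall (c : F) u, f (c *: u) = c *: f u) /\
           (forall u v, f (u * v) = f u * f v) /\
           f 1 = 1 /\ f A = a /\ f B = b)].

Definition in_Lie_gen {F : fieldType} {H : algType F} (A B x : H) : Prop :=
  forall S : H -> Prop, S A -> S B ->
    (forall u v, S u -> S v -> S (u + v)) ->
    (forall (c : F) u, S u -> S (c *: u)) ->
    (forall u v, S u -> S v -> S (comm u v)) -> S x.

Definition in_N {F : fieldType} {H : algType F} (p : nat) (A B x : H) : Prop :=
  let L := A * B - B * A in
  forall S : H -> Prop, S 0 ->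
    (forall m n : nat, (0 < m)%N -> (0 < n)%N -> (p %| m)%N -> (p %| n)%N ->
        S (B ^+ m * L ^+ n) /\ S (L ^+ n * A ^+ m)) ->
    (forall u v, S u -> S v -> S (u + v)) ->
    (forall (c : F) u, S u -> S (c *: u)) -> S x.

(* Main.v *)
Require Import Defs.
From HB Require Import structures.
From mathcomp Require Import all_boot all_order all_algebra.
Import GRing.Theory.
Local Open Scope ring_scope.
From mathcomp Require Import ring zify.
Set Warnings "-notation-overridden -ambiguous-paths -redundant-canonical-projection".
Set Implicit Arguments. Unset Strict Implicit. Unset Printing Implicit Defensive.

Section MR.
Variables (F : fieldType) (n : nat).
Definition KK := {fraction {poly {poly F}}}.
Definition inK (c : F) : KK := tofrac ((c%:P)%:P).
Lemma inKD a b : inK (a + b) = inK a + inK b.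
Proof. by rewrite /inK !rmorphD. Qed.
Lemma inKM a b : inK (a * b) = inK a * inK b.
Proof. by rewrite /inK !rmorphM. Qed.
Lemma inK1 : inK 1 = 1.
Proof. by rewrite /inK !rmorph1. Qed.
Definition MR := 'M[KK]_(n.+1).
HB.instance Definition _ := GRing.NzRing.on MR.
Definition mscale (c : F) (M : MR) : MR := inK c *: (M : 'M[KK]_(n.+1)).
Lemma mscaleA a b v : mscale a (mscale b v) = mscale (a * b) v.
Proof. by rewrite /mscale scalerA inKM. Qed.
Lemma mscale1 : left_id 1 mscale.
Proof. by move=> v; rewrite /mscale inK1 scale1r. Qed.
Lemma mscaleDr : right_distributive mscale +%R.
Proof. by move=> a u v; rewrite /mscale scalerDr. Qed.
Lemma mscaleDl v : {morph mscale^~ v: a b / a + b}.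
Proof. by move=> a b; rewrite /mscale inKD scalerDl. Qed.
HB.instance Definition _ := GRing.Zmodule_isLmodule.Build F MR mscaleA mscale1 mscaleDr mscaleDl.
Lemma mscaleAl (a : F) (u v : MR) : a *: (u * v) = (a *: u) * v.
Proof. by rewrite /GRing.scale /= /mscale -!mulmxE scalemxAl. Qed.
HB.instance Definition _ := GRing.Lmodule_isLalgebra.Build F MR mscaleAl.
Lemma mscaleAr (a : F) (u v : MR) : a *: (u * v) = u * (a *: v).
Proof. by rewrite /GRing.scale /= /mscale -!mulmxE scalemxAr. Qed.
HB.instance Definition _ := GRing.Lalgebra_isAlgebra.Build F MR mscaleAr.
End MR.
Section WMat.
Variables (K : comNzRingType) (m : nat).
Local Notation I := 'I_(m.+2).
Definition W (f : I -> K) (k : I) : 'M[K]_(m.+2) :=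
  \matrix_(i, j) (if i == j + k then f j else 0).

Lemma eq_W f g k : (forall j, f j = g j) -> W f k = W g k.
Proof. by move=> e; apply/matrixP => i j; rewrite !mxE e. Qed.

Lemma W_mul f g k l : W f k *m W g l = W (fun j => f (j + l) * g j) (l + k).
Proof.
apply/matrixP => i j; rewrite !mxE (bigD1 (j + l)) //= big1 ?addr0.
  by rewrite !mxE eqxx addrA; case: eqP => _; rewrite ?mulr1 ?mul0r.
by move=> k0 /negbTE nk; rewrite !mxE nk mulr0.
Qed.

Lemma W_add f g k : W f k + W g k = W (fun j => f j + g j) k.
Proof. by apply/matrixP => i j; rewrite !mxE; case: eqP; rewrite ?addr0. Qed.

Lemma W_opp f k : - W f k = W (fun j => - f j) k.
Proof. by apply/matrixP => i j; rewrite !mxE; case: eqP; rewrite ?oppr0. Qed.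

Lemma W_scale c f k : c *: W f k = W (fun j => c * f j) k.
Proof. by apply/matrixP => i j; rewrite !mxE; case: eqP; rewrite ?mulr0. Qed.

Lemma W_const c : W (fun _ => c) 0 = c%:M.
Proof. by apply/matrixP => i j; rewrite !mxE addr0 eq_sym; case: eqP. Qed.

Lemma W_exp f k N : (W f k) ^+ N = W (fun j => \prod_(l < N) f (j + k *+ l)) (k *+ N).
Proof.
elim: N => [|N IH].
  rewrite expr0 mulr0n; apply/matrixP => i j; rewrite !mxE big_ord0 addr0 eq_sym.
  by case: eqP.
rewrite (exprSr (W f k)) IH -mulmxE W_mul -mulrS; apply: eq_W => j. rewrite big_ord_recl mulr0n addr0 mulrC; congr (_ * _).
by apply: eq_bigr => l _; rewrite mulrS addrA.
Qed.

Lemma W_tr0 f : \tr (W f 0) = \sum_j f j.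
Proof. by rewrite /mxtrace; apply: eq_bigr => i _; rewrite mxE addr0 eqxx. Qed.

Lemma W_tr f k : k != 0 -> \tr (W f k) = 0.
Proof.
move=> nk; rewrite /mxtrace big1 // => i _; rewrite mxE.
case: eqP => // /eqP; rewrite -subr_eq0 opprD addrA subrr sub0r oppr_eq0 (negbTE nk).
by [].
Qed.
End WMat.

Section NRep.
Variables (F : fieldType) (H : algType F) (p : nat) (A B : H).
Definition Tm i j := B ^+ (p * i.+1) * (A * B - B * A) ^+ (p * j.+1).
Definition Um i j := (A * B - B * A) ^+ (p * j.+1) * A ^+ (p * i.+1).
Definition Nsum M (c d : nat -> nat -> F) : H :=
  \sum_(i < M) \sum_(j < M) (c i j *: Tm i j + d i j *: Um i j).
Definition pad M (c : nat -> nat -> F) i j := if (i < M)%N && (j < M)%N then c i j else 0.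

Lemma widen2 (V : zmodType) M1 M (f : nat -> nat -> V) : (M1 <= M)%N ->
  \sum_(i < M) \sum_(j < M) (if (i < M1)%N && (j < M1)%N then f i j else 0)
  = \sum_(i < M1) \sum_(j < M1) f i j.
Proof.
move=> le; rewrite [RHS](big_ord_widen M (fun i => \sum_(j < M1) f i j) le) [RHS]big_mkcond.
apply: eq_bigr => i _; case hi: (i < M1)%N => /=.
  by rewrite [RHS](big_ord_widen M (fun j => f i j) le) [RHS]big_mkcond.
by rewrite big1.
Qed.

Lemma Nsum_pad M1 M c d : (M1 <= M)%N -> Nsum M (pad M1 c) (pad M1 d) = Nsum M1 c d.
Proof.
move=> le; rewrite /Nsum -(widen2 (fun i j => c i j *: Tm i j + d i j *: Um i j) le).
apply: eq_bigr => i _; apply: eq_bigr => j _; rewrite /pad.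
by case: ifP => _; rewrite ?scale0r ?addr0.
Qed.

Lemma Nsum_add M c1 d1 c2 d2 :
  Nsum M c1 d1 + Nsum M c2 d2 = Nsum M (fun i j => c1 i j + c2 i j) (fun i j => d1 i j + d2 i j).
Proof.
rewrite /Nsum -big_split; apply: eq_bigr => i _; rewrite -big_split; apply: eq_bigr => j _.
by rewrite !scalerDl; rewrite addrACA.
Qed.

Lemma Nsum_scale a M c d : a *: Nsum M c d = Nsum M (fun i j => a * c i j) (fun i j => a * d i j).
Proof.
rewrite /Nsum scaler_sumr; apply: eq_bigr => i _; rewrite scaler_sumr; apply: eq_bigr => j _.
by rewrite scalerDr !scalerA.
Qed.

Lemma sum_delta (V : zmodType) M i0 j0 (f : nat -> nat -> V) : (i0 < M)%N -> (j0 < M)%N ->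
  \sum_(i < M) \sum_(j < M) (if ((i : nat) == i0) && ((j : nat) == j0) then f i j else 0) = f i0 j0.
Proof.
move=> hi hj; rewrite (bigD1 (Ordinal hi)) //= [X in _ + X]big1 ?addr0.
  rewrite (bigD1 (Ordinal hj)) //= [X in _ + X]big1 ?addr0 ?eqxx //.
  move=> j /= nj; have -> : (nat_of_ord j == j0) = false.
    by apply: (contraNF _ nj) => /eqP e; apply/eqP/val_inj.
  by rewrite ?andbF.
move=> i /= ni; rewrite big1 // => j _.
have -> : (nat_of_ord i == i0) = false by apply: (contraNF _ ni) => /eqP e; apply/eqP/val_inj.
by [].
Qed.

Definition Nrep (x : H) := exists M c d, x = Nsum M c d.

Lemma in_N_rep x : (0 < p)%N -> in_N p A B x -> Nrep x.
Proof.
move=> p0 hx; apply: hx.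
- by exists 0%N, (fun _ _ => 0), (fun _ _ => 0); rewrite /Nsum big_ord0.
- move=> m n m0 n0 /dvdnP [i' Hm] /dvdnP [j' Hn]; subst m n.
  case: i' m0 => [|i]; first by rewrite mul0n.
  case: j' n0 => [|j]; first by rewrite mul0n.
  move=> _ _; set M := (maxn i j).+1.
  have hi : (i < M)%N by rewrite ltnS leq_maxl.
  have hj : (j < M)%N by rewrite ltnS leq_maxr.
  split.
  + have -> : B ^+ (i.+1 * p) * (A*B - B*A) ^+ (j.+1 * p) = Tm i j by rewrite /Tm [(i.+1 * p)%N]mulnC [(j.+1 * p)%N]mulnC.
    exists M, (fun i1 j1 => if (i1 == i) && (j1 == j) then 1 else 0), (fun _ _ => 0).
    rewrite /Nsum -(sum_delta (fun i1 j1 => Tm i1 j1) hi hj).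
    apply: eq_bigr => i1 _; apply: eq_bigr => j1 _.
    by case: ifP => _; rewrite ?scale1r ?scale0r ?addr0.
  + have -> : (A*B - B*A) ^+ (j.+1 * p) * A ^+ (i.+1 * p) = Um i j by rewrite /Um [(i.+1 * p)%N]mulnC [(j.+1 * p)%N]mulnC.
    exists M, (fun _ _ => 0), (fun i1 j1 => if (i1 == i) && (j1 == j) then 1 else 0).
    rewrite /Nsum -(sum_delta (fun i1 j1 => Um i1 j1) hi hj).
    apply: eq_bigr => i1 _; apply: eq_bigr => j1 _.
    by case: ifP => _; rewrite ?scale1r ?scale0r ?add0r.
- move=> u v [M1 [c1 [d1 ->]]] [M2 [c2 [d2 ->]]].
  exists (M1 + M2)%N, (fun i j => pad M1 c1 i j + pad M2 c2 i j), (fun i j => pad M1 d1 i j + pad M2 d2 i j).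
  by rewrite -Nsum_add !Nsum_pad ?leq_addr ?leq_addl.
- move=> a u [M [c [d ->]]].
  by exists M, (fun i j => a * c i j), (fun i j => a * d i j); rewrite Nsum_scale.
Qed.
End NRep.

Section Concrete.
Variables (F : fieldType) (q : F) (m : nat).
Hypothesis hq : (m.+2).-primitive_root q.
Local Notation I := 'I_(m.+2).
Local Notation KK := (KK F).
Local Notation MR := (MR F m.+1).
Local Notation inK := (@inK F).

Definition s : KK := tofrac 'X.
Definition z : KK := tofrac ('X%:P).
Definition ep (j : I) : {poly F} := ((q ^+ j)%:P * 'X - 1) * ((q - 1)^-1)%:P.
Definition e (j : I) : KK := tofrac ((ep j)%:P).
Definition b (j : I) : KK := if j == -1 then s else 1.
Definition a (j : I) : KK := e j / b (j - 1).
Definition Bm : MR := W b 1.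
Definition Am : MR := W a (-1).

Lemma q_neq1 : q != 1.
Proof. by rewrite -(prim_order_dvd hq 1) dvdn1. Qed.

Lemma s_neq0 : s != 0.
Proof. by rewrite /s tofrac_eq0 polyX_eq0. Qed.

Lemma b_neq0 j : b j != 0.
Proof. by rewrite /b; case: ifP => _; [exact: s_neq0 | exact: oner_neq0]. Qed.

Lemma qS (j : I) : q ^+ (nat_of_ord ((j + 1)%R : I)) = q ^+ j.+1.
Proof. by rewrite /= modnDmr (prim_expr_mod hq) addn1. Qed.

Lemma hc : (q%:P - 1) * ((q - 1)^-1)%:P = 1 :> {poly F}.
Proof. by rewrite -polyC1 -polyCB -polyCM divff // subr_eq0 q_neq1. Qed.

Lemma ep_rel j : ep (j + 1) - q%:P * ep j = 1.
Proof.
rewrite /ep qS exprS polyCM.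
transitivity ((q%:P - 1) * ((q - 1)^-1)%:P : {poly F}); first by ring.
exact: hc.
Qed.

Lemma ep_diff j : ep (j + 1) - ep j = (q ^+ j)%:P * 'X.
Proof.
rewrite /ep qS exprS polyCM.
transitivity ((q ^+ j)%:P * 'X * ((q%:P - 1) * ((q - 1)^-1)%:P) : {poly F}); first by ring.
by rewrite hc mulr1.
Qed.

Lemma AB : (Am : 'M_(m.+2)) *m Bm = W (fun j => e (j + 1)) 0.
Proof.
rewrite /Am /Bm W_mul addrN; apply: eq_W => j.
by rewrite /a addrK divfK ?b_neq0.
Qed.

Lemma BA : (Bm : 'M_(m.+2)) *m Am = W e 0.
Proof.
rewrite /Am /Bm W_mul addNr; apply: eq_W => j.
by rewrite /a mulrC divfK ?b_neq0.
Qed.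

Lemma rel : Am * Bm - q *: (Bm * Am) = 1.
Proof.
rewrite -!mulmxE AB BA.
have -> : q *: (W e 0 : MR) = W (fun j => inK q * e j) 0 by rewrite -W_scale.
have -> : (1 : MR) = W (fun _ => 1) 0 by rewrite W_const.
rewrite W_opp W_add; apply: eq_W => j.
by rewrite /e /inK -rmorphM -rmorphB -polyCM -rmorphB ep_rel.
Qed.

Lemma p0I : (1 *+ m.+2 : I) = 0.
Proof. exact: (pchar_Zp (isT : (1 < m.+2)%N)). Qed.

Lemma prod_b : \prod_(l : I) b l = s.
Proof.
rewrite (bigD1 (-1)) //= big1 ?mulr1 /b ?eqxx //.
by move=> l /negbTE ->.
Qed.

Lemma Bp : (Bm ^+ (m.+2) : MR) = W (fun _ => s) 0.
Proof.
rewrite /Bm W_exp p0I; apply: eq_W => j.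
rewrite -prod_b [RHS](reindex_inj (addrI j)) /=.
by apply: eq_bigr => l _; rewrite natr_Zp.
Qed.

Definition alpha : KK := (\prod_(l : I) e l) / s.

Lemma Ap : (Am ^+ (m.+2) : MR) = W (fun _ => alpha) 0.
Proof.
rewrite /Am W_exp mulNrn p0I oppr0; apply: eq_W => j.
rewrite /alpha -prod_b.
have -> : \prod_(l : I) b l = \prod_(l : I) b (l - 1) by rewrite [LHS](reindex_inj (addIr (-1))).
rewrite -prodf_div [RHS](reindex_inj (subrI j)) /=.
by apply: eq_bigr => l _; rewrite mulNrn natr_Zp.
Qed.

Lemma rhoB i : (Bm ^+ (m.+2 * i.+1) : MR) = W (fun _ => s ^+ i.+1) 0.
Proof.
rewrite exprM Bp W_exp mul0rn; apply: eq_W => j.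
by rewrite prodr_const card_ord.
Qed.

Lemma rhoA i : (Am ^+ (m.+2 * i.+1) : MR) = W (fun _ => alpha ^+ i.+1) 0.
Proof.
rewrite exprM Ap W_exp mul0rn; apply: eq_W => j.
by rewrite prodr_const card_ord.
Qed.

Lemma rhoL k : ((Am * Bm - Bm * Am) ^+ (m.+2 * k.+1) : MR) = W (fun _ => z ^+ (m.+2 * k.+1)) 0.
Proof.
rewrite -!mulmxE AB BA W_opp W_add.
have -> : W (fun j => e (j + 1) + - e j) 0 = W (fun j : I => inK (q ^+ j) * z) 0.
  apply: eq_W => j; rewrite /e -rmorphB -polyCB ep_diff /inK /z.
  by rewrite -rmorphM polyCM.
rewrite W_exp mul0rn; apply: eq_W => j.
under eq_bigr do rewrite mul0rn addr0.
rewrite prodr_const card_ord exprMn /inK -!rmorphXn /=.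
rewrite -exprM mulnCA exprM (prim_expr_order hq) expr1n.
by rewrite !rmorph1 mul1r.
Qed.

Lemma W_sum (I0 : Type) (r : seq I0) (G : I0 -> I -> KK) k :
  \sum_(i <- r) W (G i) k = W (fun j => \sum_(i <- r) G i j) k.
Proof.
elim: r => [|x r IH].
  by rewrite big_nil; apply/matrixP => i j; rewrite !mxE big_nil; case: eqP.
rewrite big_cons IH W_add; apply: eq_W => j; by rewrite big_cons.
Qed.

Lemma tr_Wc (c : KK) : \tr (W (fun _ : I => c) 0) = c *+ m.+2.
Proof. by rewrite W_tr0 sumr_const card_ord. Qed.

Lemma trA : \tr (Am : 'M_(m.+2)) = 0.
Proof. apply: W_tr; rewrite oppr_eq0; exact: oner_neq0. Qed.

Lemma trB : \tr (Bm : 'M_(m.+2)) = 0.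
Proof. apply: W_tr; exact: oner_neq0. Qed.

Definition Ep : {poly F} := \prod_(l : I) ep l.

Lemma alphaE : alpha = tofrac (Ep%:P) / s.
Proof. by rewrite /alpha /Ep /e !rmorph_prod. Qed.

Lemma ep_neq0 l : ep l != 0.
Proof.
apply/eqP => h0; have := congr1 (horner^~ 0) h0; rewrite /ep !hornerE /=.
move/eqP; rewrite mulf_eq0 invr_eq0 subr_eq0 (negbTE q_neq1) orbF.
by rewrite oppr_eq0 oner_eq0.
Qed.

Lemma Ep_neq0 : Ep != 0.
Proof. by rewrite /Ep; apply/prodf_neq0 => l _; exact: ep_neq0. Qed.

Lemma L1 (Y : {poly F}) n : tofrac ((Y *: 'X^n) : {poly {poly F}}) = tofrac (Y%:P) * s ^+ n.
Proof. by rewrite -mul_polyC rmorphM rmorphXn. Qed.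

Lemma L2 (c : F) n : tofrac (((c *: 'X^n : {poly F}))%:P) = inK c * z ^+ n.
Proof. by rewrite -mul_polyC polyCM rmorphM rmorphXn /= rmorphXn. Qed.

Lemma L3 (Y Y' : {poly F}) : tofrac ((Y * Y')%:P) = tofrac (Y%:P) * tofrac (Y'%:P).
Proof. by rewrite polyCM rmorphM. Qed.

Lemma L4 (Y : {poly F}) k : tofrac ((Y ^+ k)%:P) = tofrac (Y%:P) ^+ k.
Proof. by rewrite rmorphXn /= rmorphXn. Qed.

Definition Tsum M (c d : nat -> nat -> F) : KK :=
  \sum_(i < M) \sum_(j < M) (inK (c i j) * (s ^+ i.+1 * z ^+ (m.+2 * j.+1))
     + inK (d i j) * (z ^+ (m.+2 * j.+1) * alpha ^+ i.+1)).

Definition Ppoly M (c d : nat -> nat -> F) : {poly {poly F}} :=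
  \sum_(i < M) \sum_(j < M) ((c i j *: 'X^(m.+2 * j.+1)) *: 'X^(M + i.+1)
     + (Ep ^+ i.+1 * (d i j *: 'X^(m.+2 * j.+1))) *: 'X^(M - i.+1)).

Lemma Ppoly_Tsum M c d : tofrac (Ppoly M c d) = s ^+ M * Tsum M c d.
Proof.
rewrite /Ppoly /Tsum rmorph_sum mulr_sumr; apply: eq_bigr => i _.
rewrite rmorph_sum mulr_sumr; apply: eq_bigr => j _.
rewrite rmorphD /= !L1 L3 L4 !L2 alphaE.
have hi : (i.+1 <= M)%N by exact: ltn_ord.
rewrite exprD expr_div_n.
set t := s ^+ i.+1; set u := s ^+ (M - i.+1).
have hM : s ^+ M = u * t by rewrite /u /t -exprD subnK.
have ht : t != 0 by rewrite expf_neq0 // s_neq0.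
rewrite hM.
set w := (tofrac Ep%:P ^+ i.+1 / t).
have hw : tofrac Ep%:P ^+ i.+1 = w * t by rewrite /w divfK.
rewrite hw; ring.
Qed.

Lemma sum_delta1 (V : zmodType) M i0 (G : nat -> V) : (i0 < M)%N ->
  \sum_(i < M) (if (i : nat) == i0 then G i else 0) = G i0.
Proof.
move=> hi; rewrite (bigD1 (Ordinal hi)) //= eqxx big1 ?addr0 //.
move=> i /= ni; have -> : (nat_of_ord i == i0) = false.
  by apply: (contraNF _ ni) => /eqP e0; apply/eqP/val_inj.
by [].
Qed.

Lemma mul_natb (R : pzSemiRingType) (x : R) (bb : bool) : x * bb%:R = if bb then x else 0.
Proof. by case: bb; rewrite ?mulr1 ?mulr0. Qed.

Lemma coef_Ppoly M c d k : (Ppoly M c d)`_k = \sum_(i < M) \sum_(j < M)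
   ((if k == (M + i.+1)%N then c i j *: 'X^(m.+2 * j.+1) else 0)
   + (if k == (M - i.+1)%N then Ep ^+ i.+1 * (d i j *: 'X^(m.+2 * j.+1)) else 0)).
Proof.
rewrite /Ppoly coef_sum; apply: eq_bigr => i _; rewrite coef_sum; apply: eq_bigr => j _.
by rewrite coefD !coefZ !coefXn !mul_natb.
Qed.

Lemma coef_Xsum M (g : nat -> F) j0 : (j0 < M)%N ->
  (\sum_(j < M) g j *: 'X^(m.+2 * j.+1) : {poly F})`_(m.+2 * j0.+1) = g j0.
Proof.
move=> hj; rewrite coef_sum -(sum_delta1 g hj); apply: eq_bigr => j _.
rewrite coefZ coefXn mul_natb eqn_pmul2l // eqSS eq_sym.
by [].
Qed.

Lemma sep M c d : Tsum M c d = 0 ->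
  forall i j, (i < M)%N -> (j < M)%N -> c i j = 0 /\ d i j = 0.
Proof.
move=> hT.
have hP : Ppoly M c d = 0 by apply/eqP; rewrite -tofrac_eq0 Ppoly_Tsum hT mulr0.
move=> i0 j0 hi hj; split.
- have h := coef_Ppoly M c d (M + i0.+1); rewrite hP coef0 in h.
  rewrite (eq_bigr (fun i : 'I_M => if (i : nat) == i0 then
       \sum_(j < M) c i j *: 'X^(m.+2 * j.+1) else 0)) in h; last first.
    move=> i _; rewrite eqn_add2l eqSS [(i0 == i)]eq_sym.
    have -> : (M + i0.+1 == M - i.+1)%N = false.
      by apply/eqP; lia.
    case: eqP => _; first by apply: eq_bigr => j _; rewrite addr0.
    by rewrite big1 // => j _; rewrite addr0.
  rewrite (sum_delta1 (fun i => \sum_(j < M) c i j *: 'X^(m.+2 * j.+1)) hi) in h.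
  by rewrite -(coef_Xsum (c i0) hj) -h coef0.
- have h := coef_Ppoly M c d (M - i0.+1); rewrite hP coef0 in h.
  rewrite (eq_bigr (fun i : 'I_M => if (i : nat) == i0 then
       Ep ^+ i.+1 * \sum_(j < M) d i j *: 'X^(m.+2 * j.+1) else 0)) in h; last first.
    move=> i _.
    have -> : (M - i0.+1 == M + i.+1)%N = false.
      by apply/eqP; lia.
    have -> : (M - i0.+1 == M - i.+1)%N = ((i : nat) == i0).
      have hi2 := ltn_ord i; apply/idP/idP => /eqP H0; apply/eqP; lia.
    case: eqP => _; first by rewrite mulr_sumr; apply: eq_bigr => j _; rewrite add0r.
    by rewrite big1 // => j _; rewrite add0r.
  rewrite (sum_delta1 (fun i => Ep ^+ i.+1 * \sum_(j < M) d i j *: 'X^(m.+2 * j.+1)) hi) in h.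
  move/eqP: h; rewrite eq_sym mulf_eq0 expf_eq0 (negbTE Ep_neq0) andbF /= => /eqP h.
  by rewrite -(coef_Xsum (d i0) hj) h coef0.
Qed.

Section Hom.
Variables (H : algType F) (A B : H) (f : H -> MR).
Hypotheses (fD : forall u v, f (u + v) = f u + f v)
  (fZ : forall (c : F) u, f (c *: u) = c *: f u)
  (fM : forall u v, f (u * v) = f u * f v)
  (f1 : f 1 = 1) (fA : f A = Am) (fB : f B = Bm).

Lemma f0 : f 0 = 0.
Proof. by rewrite -(scale0r (0 : H)) fZ scale0r. Qed.

Lemma fN u : f (- u) = - f u.
Proof. by rewrite -scaleN1r fZ scaleN1r. Qed.

Lemma fB' u v : f (u - v) = f u - f v.
Proof. by rewrite fD fN. Qed.

Lemma fX u k : f (u ^+ k) = f u ^+ k.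
Proof. by elim: k => [|k IH]; rewrite ?expr0 ?f1 // !exprS fM IH. Qed.

Lemma f_sum (I0 : Type) (r : seq I0) (G : I0 -> H) : f (\sum_(i <- r) G i) = \sum_(i <- r) f (G i).
Proof. by elim: r => [|x r IH]; rewrite ?big_nil ?f0 // !big_cons fD IH. Qed.

Lemma trZ (c : F) (M : MR) : \tr ((c *: M : MR) : 'M_(m.+2)) = inK c * \tr (M : 'M_(m.+2)).
Proof. exact: mxtraceZ. Qed.

Lemma Lie_tr x : in_Lie_gen A B x -> \tr (f x : 'M_(m.+2)) = 0.
Proof.
move=> hx; apply: (hx (fun x => \tr (f x : 'M_(m.+2)) = 0)).
- by rewrite fA trA.
- by rewrite fB trB.
- by move=> u v hu hv; rewrite fD mxtraceD hu hv addr0.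
- by move=> c u hu; rewrite fZ trZ hu mulr0.
- move=> u v _ _; rewrite /comm fB' !fM -!mulmxE.
  by rewrite linearB /= mxtrace_mulC subrr.
Qed.

Lemma f_Nsum M c d : f (Nsum (m.+2) A B M c d) = W (fun _ => Tsum M c d) 0.
Proof.
transitivity (\sum_(i < M) \sum_(j < M) W (fun _ : I => inK (c i j) * (s ^+ i.+1 * z ^+ (m.+2 * j.+1))
     + inK (d i j) * (z ^+ (m.+2 * j.+1) * alpha ^+ i.+1)) 0).
  rewrite /Nsum f_sum; apply: eq_bigr => i _; rewrite f_sum; apply: eq_bigr => j _.
  rewrite fD !fZ /Tm /Um !fM !fX fB' !fM fA fB rhoB rhoA rhoL -!mulmxE !W_mul.
  rewrite /GRing.scale /= /mscale !W_scale W_add addr0; apply: eq_W => k.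
  by [].
under eq_bigr => i _ do rewrite W_sum.
by rewrite W_sum.
Qed.

Lemma tr_Nsum M c d : \tr (f (Nsum (m.+2) A B M c d) : 'M_(m.+2)) = Tsum M c d *+ m.+2.
Proof. by rewrite f_Nsum tr_Wc. Qed.
End Hom.
End Concrete.

Lemma pK_neq0 (F : fieldType) (q : F) m : (m.+2).-primitive_root q -> (m.+2)%:R != 0 :> KK F.
Proof.
move=> hq; rewrite -(rmorph_nat (@tofrac _)) tofrac_eq0 -!polyC_natr !polyC_eq0.
exact: prim_root_natf_neq0 hq.
Qed.

Unset Implicit Arguments.
Theorem corollary1 (F : fieldType) (q : F) (p : nat)
  (hp : (1 < p)%N) (hq : p.-primitive_root q)
  (H : algType F) (A B : H) (hH : is_qHeisenberg q A B) :
  forall x : H, in_Lie_gen A B x -> in_N p A B x -> x = 0.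
Proof.
case: p hp hq => [|[|m]] // _ hq.
case: hH => _ _ univ.
have [f [fD [fZ [fM [f1 [fA fB]]]]]] := univ (MR F m.+1) (Am q m) (Bm F m) (rel hq).
move=> x hL hN.
have [M [c [d hx]]] := in_N_rep (isT : (0 < m.+2)%N) hN.
have htr := Lie_tr fD fZ fM fA fB hL.
rewrite hx (tr_Nsum hq fD fZ fM f1 fA fB) -mulr_natr in htr.
move/eqP: htr; rewrite mulf_eq0 (negbTE (pK_neq0 hq)) orbF => /eqP hT.
rewrite hx /Nsum big1 // => i _; rewrite big1 // => j _.
have [-> ->] := sep hq hT (ltn_ord i) (ltn_ord j).
by rewrite !scale0r addr0.
Qed.
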